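(* Let $S$ denote the sorting problem on $n$ elements. Then $D_1(S,n)=\lceil 3n/2\rceil-2$.
   Context: Sorting problem $S$ on $n$ elements: the input is an assignment of $n$ distinct real numbers $a_1,\dots,a_n$ to $n$ labeled elements (equivalently, a total order on them); a query is a pair $\{i,j\}$ and its answer tells whether $a_i<a_j$; the goal is to determine the increasing order of the elements. $D_k(S,n)$ is defined by the following game between a Questioner and an Adversary. The Adversary chooses an input (the current input). The Questioner, who always knows the current input, asks queries one after another; each query is answered according to the current input. Between queries the Adversary may replace the current input by any other input consistent with all answers given so far, but at most $k$ times in total. The game ends as soon as the answers given determine the increasing order. $D_k(S,n)$ is the number of queries asked when the Questioner minimizes and the Adversary maximizes this number. *)

(* Defs.v *)
From mathcomp Require Import all_boot all_order.
From mathcomp Require Import all_fingroup.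

Set Implicit Arguments.
Unset Strict Implicit.
Unset Printing Implicit Defensive.

(* An input on n labelled elements 0..n-1 is encoded by the permutation
   [s : {perm 'I_n}] giving the rank of each element: a_i < a_j  <->  s i < s j.
   (Only the relative order of the a_i matters for the game.) *)

(* Answers given so far: a list of ordered pairs (i, j) meaning "a_i < a_j". *)
Definition answers (n : nat) := seq ('I_n * 'I_n).

Definition consistent n (A : answers n) (s : {perm 'I_n}) : bool :=
  all (fun p => s p.1 < s p.2) A.

(* The answers determine the increasing order: at most one (hence, since the
   current input is always consistent, exactly one) consistent input. *)
Definition determined n (A : answers n) : Prop :=
  forall s t : {perm 'I_n}, consistent A s -> consistent A t -> s = t.

Definition answer n (s : {perm 'I_n}) (i j : 'I_n) : 'I_n * 'I_n :=
  if s i < s j then (i, j) else (j, i).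

(* [win q A s k]: in the position where the answers so far are A, the current
   input is s and the Adversary has k changes left, the Questioner can force
   the game to end after at most q further queries. *)
Fixpoint win n (q : nat) (A : answers n) (s : {perm 'I_n}) (k : nat) : Prop :=
  match q with
  | 0 => determined A
  | q'.+1 =>
      determined A \/
      exists i j : 'I_n, i <> j /\
        let A' := answer s i j :: A in
        (* the Adversary keeps the current input *)
        win q' A' s k /\
        (* or replaces it (using one change) by any consistent input *)
        (0 < k -> forall t : {perm 'I_n}, consistent A' t -> win q' A' t k.-1)
  end.

(* [is_D k n d] : D_k(S, n) = d, i.e. d is the least number of queries the
   Questioner can guarantee against every Adversary (who chooses the initial
   input and then at most k changes). *)
Definition is_D (k n d : nat) : Prop :=
  (forall s : {perm 'I_n}, win d [::] s k) /\
  (forall q, (forall s : {perm 'I_n}, win q [::] s k) -> d <= q).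

(* Main.v *)
Require Import Defs.
From mathcomp Require Import all_boot all_order all_fingroup zify.
Set Implicit Arguments. Unset Strict Implicit. Unset Printing Implicit Defensive.

Definition adjn N (t : {perm 'I_N.+1}) (i : nat) : 'I_N.+1 * 'I_N.+1 :=
  ((t^-1)%g (inord i), (t^-1)%g (inord i.+1)).
Definition miss N (A : answers N.+1) (t : {perm 'I_N.+1}) :=
  count (fun i => adjn t i \notin A) (iota 0 N).

Lemma count_eq0 (T : Type) (a : pred T) s : (count a s == 0) = ~~ has a s.
Proof. by rewrite has_count lt0n negbK. Qed.

Lemma ord_neq N (x y : 'I_N) : x <> y -> nat_of_ord x <> nat_of_ord y.
Proof. by move=> H E; apply H, val_inj. Qed.

Lemma count_inj (T1 T2 : eqType) (P : pred T1) (Q : pred T2) (s1 : seq T1)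
  (s2 : seq T2) (f : T1 -> T2) : uniq s1 ->
  (forall x, x \in s1 -> P x -> (f x \in s2) && Q (f x)) ->
  {in [seq x <- s1 | P x] &, injective f} -> count P s1 <= count Q s2.
Proof.
move=> Hu Hf Hi; rewrite -!size_filter -(size_map f); apply: uniq_leq_size.
  by rewrite map_inj_in_uniq // filter_uniq.
move=> y /mapP [x]; rewrite mem_filter => /andP [Px xs] ->.
by rewrite mem_filter; have /andP [h1 h2] := Hf x xs Px; rewrite h1 h2.
Qed.

Lemma count_le_split (T : Type) (P P' Q : pred T) s :
  (forall x, P x -> P' x || Q x) -> count P s <= count P' s + count Q s.
Proof.
move=> H; elim: s => //= x s IH; have := H x.
case: (P x); case: (P' x); case: (Q x) => //= h; try lia.
all: by have := h isT.
Qed.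

Lemma count_lt (T : eqType) (P P' : pred T) s x : (forall y, P' y -> P y) ->
  x \in s -> P x -> ~~ P' x -> count P' s < count P s.
Proof.
move=> H; elim: s => //= y s IH; rewrite in_cons => /orP [/eqP <-|xs] Px nP'.
  rewrite Px (negbTE nP') /= add0n add1n ltnS; exact: sub_count.
have := IH xs Px nP'; case: (P' y) (H y) => [->//|_] /=; case: (P y) => /=; lia.
Qed.

Lemma adjn_inj N (t : {perm 'I_N.+1}) x y : x <= N -> y <= N ->
  adjn t x = adjn t y -> x = y.
Proof.
move=> hx hy /(congr1 fst) /= /perm_inj /(congr1 val) /=.
rewrite !inordK //; lia.
Qed.

Lemma perm_incr_id N (g : {perm 'I_N.+1}) :
  (forall i, i < N -> g (inord i) < g (inord i.+1)) -> forall x, g x = x.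
Proof.
move=> H.
have K : forall d i, i + d <= N -> (g (inord i) : nat) + d <= g (inord (i + d)).
  elim=> [|d IH] i hid; first by rewrite !addn0.
  have h1 : i + d <= N by lia.
  have h2 : i + d < N by lia.
  rewrite !addnS; have := IH i h1; have := H (i + d) h2; lia.
move=> x; apply: val_inj => /=.
have := K (nat_of_ord x) 0; rewrite add0n inord_val => /(_ (ltnSE (ltn_ord x))) h1.
have := K (N - x) (nat_of_ord x); rewrite inord_val subnKC; last exact: ltnSE (ltn_ord x).
move=> /(_ (leqnn _)) h2.
have := ltn_ord (g (inord N)); lia.
Qed.

Lemma det_miss0 N (A : answers N.+1) t : consistent A t -> miss A t = 0 -> determined A.
Proof.
move=> Ht /eqP; rewrite count_eq0 => /hasPn H0.
have key : forall u, consistent A u -> u = t.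
  move=> u Hu.
  have Hg : forall x, (t^-1 * u)%g x = x.
    apply: perm_incr_id => i hi; rewrite !permM.
    have := H0 i; rewrite mem_iota add0n hi => /(_ isT); rewrite negbK => hA.
    by have := allP Hu _ hA.
  apply/permP => y; have := Hg (t y); by rewrite permM permK.
by move=> u v Hu Hv; rewrite (key u Hu) (key v Hv).
Qed.

Lemma miss0_det N (A : answers N.+1) t : determined A -> consistent A t -> miss A t = 0.
Proof.
move=> Hd Ht.
suff H : forall i : nat, i < N -> adjn t i \in A.
  apply/eqP; rewrite count_eq0; apply/hasPn => i.
  by rewrite mem_iota add0n => /andP [_ /H ->].
move=> i hi; apply/negP => Hn.
set a : 'I_N.+1 := inord i; set b : 'I_N.+1 := inord i.+1.
have va : nat_of_ord a = i by rewrite /a inordK //; lia.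
have vb : nat_of_ord b = i.+1 by rewrite /b inordK //; lia.
set t' := (t * tperm a b)%g.
have Hc : consistent A t'.
  apply/allP => e he; have := allP Ht e he; rewrite /t' !permM.
  set x := t e.1; set y := t e.2.
  case: tpermP => [E1|E1|N1 N2]; case: tpermP => [E2|E2|N3 N4] /=;
    rewrite ?E1 ?E2 ?va ?vb;
    try (have := ord_neq N1; have := ord_neq N2);
    try (have := ord_neq N3; have := ord_neq N4); rewrite ?va ?vb; try lia.
  exfalso; apply: Hn.
  suff -> : adjn t i = e by [].
  rewrite /adjn -/a -/b -E1 -E2 /x /y !permK; by case: e {he E1 E2 x y}.
have := Hd _ _ Hc Ht => /(congr1 (fun p : {perm 'I_N.+1} => nat_of_ord (p ((t^-1)%g a)))).
rewrite /t' permM permKV tpermL => /val_inj E; move: vb; rewrite E va; lia.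
Qed.

Lemma ans_cons N (t : {perm 'I_N.+1}) i j (A : answers N.+1) :
  i <> j -> consistent A t -> consistent (answer t i j :: A) t.
Proof.
move=> hij Ht; rewrite /consistent /=; rewrite /consistent in Ht; rewrite Ht andbT /answer.
case: ifP => //= h; have : t i <> t j by move/perm_inj.
move/ord_neq; lia.
Qed.

Lemma ans_lt N (t : {perm 'I_N.+1}) i j : i <> j -> t (answer t i j).1 < t (answer t i j).2.
Proof. move=> hij; have := ans_cons (t := t) (A := [::]) hij erefl; rewrite /consistent /= andbT. done. Qed.

Lemma win_det N q (A : answers N.+1) s k : determined A -> win q A s k.
Proof. by case: q => [|q] /=; [|left]. Qed.

Lemma win_lb N q (A : answers N.+1) t k : consistent A t -> win q A t k -> miss A t <= q.
Proof.
elim: q A k => [|q IH] A k Hc /=; first by move=> Hd; rewrite (miss0_det Hd Hc).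
case=> [Hd|[i [j [Hij [H1 _]]]]]; first by rewrite (miss0_det Hd Hc).
have := IH _ _ (ans_cons Hij Hc) H1.
set ans := answer t i j.
have Hs : miss A t <= miss (ans :: A) t + count (fun x => adjn t x == ans) (iota 0 N).
  apply: count_le_split => x /=; rewrite in_cons; case: (adjn t x == ans) => //= -> //.
have Hq : count (fun x => adjn t x == ans) (iota 0 N) <= count predT [:: ans].
  apply: (count_inj (f := adjn t)); first exact: iota_uniq.
    by move=> z _ /eqP ->; rewrite inE eqxx.
  move=> z w; rewrite !mem_filter !mem_iota => /andP [_ hx] /andP [_ hy].
  apply: adjn_inj; lia.
move: Hs Hq => /=; lia.
Qed.

Lemma win_ub0 N q (A : answers N.+1) t : consistent A t -> miss A t <= q -> win q A t 0.
Proof.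
elim: q A => [|q IH] A Hc Hm /=.
  by apply: det_miss0 Hc _; lia.
case Hm0: (miss A t == 0); first by left; apply: det_miss0 Hc _; apply/eqP.
right.
have : has (fun i => adjn t i \notin A) (iota 0 N) by rewrite has_count lt0n Hm0.
case/hasP => i; rewrite mem_iota add0n => /andP [_ hi] Hn.
have va : nat_of_ord (inord i : 'I_N.+1) = i by rewrite inordK //; lia.
have vb : nat_of_ord (inord i.+1 : 'I_N.+1) = i.+1 by rewrite inordK //; lia.
exists ((t^-1)%g (inord i)), ((t^-1)%g (inord i.+1)); split.
  move/perm_inj/(congr1 (@nat_of_ord _)); rewrite va vb; lia.
have Hans : answer t ((t^-1)%g (inord i)) ((t^-1)%g (inord i.+1)) = adjn t i.
  by rewrite /answer !permKV va vb ltnSn.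
rewrite Hans; split => //.
apply: IH.
  by rewrite /consistent /=; rewrite /consistent in Hc; rewrite Hc andbT !permKV va vb.
have : miss (adjn t i :: A) t < miss A t.
  apply: (count_lt (x := i)).
  - by move=> y; rewrite in_cons negb_or => /andP [].
  - by rewrite mem_iota; lia.
  - exact: Hn.
  - by rewrite in_cons eqxx.
lia.
Qed.

Fixpoint path N (s : {perm 'I_N.+1}) j : answers N.+1 :=
  if j is j'.+1 then adjn s j' :: path s j' else [::].

Lemma mem_path N (s : {perm 'I_N.+1}) i j : i < j -> adjn s i \in path s j.
Proof.
elim: j => [|j IH] //= hij; rewrite in_cons.
case: (eqVneq i j) => [->|ne]; first by rewrite eqxx.
by rewrite IH ?orbT //; rewrite ltnS leq_eqVlt (negbTE ne) in hij.
Qed.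

Lemma path_cons N (s : {perm 'I_N.+1}) j : j <= N -> consistent (path s j) s.
Proof.
elim: j => [|j IH] //= hj.
rewrite /consistent /=; have := IH (ltnW hj); rewrite /consistent => ->.
rewrite andbT !permKV !inordK //; lia.
Qed.

Lemma miss_path N (s : {perm 'I_N.+1}) : miss (path s N) s = 0.
Proof.
apply/eqP; rewrite count_eq0; apply/hasPn => i; rewrite mem_iota add0n => /andP [_ hi].
by rewrite negbK mem_path.
Qed.

Lemma path_count N (s t : {perm 'I_N.+1}) m : m <= N -> consistent (path s m) t ->
  miss (path s m) t + m.*2 <= N.*2.
Proof.
move=> hm Hc.
pose g a := nat_of_ord (t ((s^-1)%g (inord a))).
have Hg : forall a, a < m -> g a < g a.+1.
  move=> a ha; have := allP Hc _ (mem_path s ha); by [].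
pose adj a := g a.+1 == (g a).+1.
have K : forall j, j <= m -> g 0 + j.*2 <= g j + count adj (iota 0 j).
  elim=> [|j IH] hj; first by rewrite addn0.
  rewrite -addn1 iotaD count_cat /= add0n addn0.
  have := IH (ltnW hj); have := Hg j hj; rewrite /adj addn1.
  case: eqP => /= E; lia.
have Hgm : g m <= N by have := ltn_ord (t ((s^-1)%g (inord m))); rewrite /g; lia.
have Hinj : count adj (iota 0 m) <= count (fun i => adjn t i \in path s m) (iota 0 N).
  apply: (count_inj (f := g)); first exact: iota_uniq.
    move=> a; rewrite mem_iota add0n => /andP [_ ha] /eqP Ha.
    have hgN : g a < N by have := ltn_ord (t ((s^-1)%g (inord a.+1))); rewrite -/(g a.+1) Ha; lia.
    rewrite mem_iota add0n hgN /=.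
    suff -> : adjn t (g a) = adjn s a by apply: mem_path.
    rewrite /adjn -Ha /g !inord_val !permK //.
  move=> a b; rewrite !mem_filter !mem_iota !add0n => /andP [_ ha] /andP [_ hb].
  rewrite /g => /val_inj /perm_inj /perm_inj /(congr1 (@nat_of_ord _)).
  rewrite !inordK //; lia.
have E : count (fun i => adjn t i \in path s m) (iota 0 N) + miss (path s m) t = N.
  by have := count_predC (fun i => adjn t i \in path s m) (iota 0 N); rewrite size_iota.
have := K m (leqnn m).
rewrite -!addnn; lia.
Qed.

Lemma ub N (s : {perm 'I_N.+1}) : forall r j, j + r = N ->
  win (N + N %/ 2 - j) (path s j) s 1.
Proof.
elim=> [|r IH] j Hjr.
  apply: win_det; apply: det_miss0 (path_cons s _) _; first by lia.
  by rewrite addn0 in Hjr; rewrite Hjr miss_path.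
have -> : N + N %/ 2 - j = (N + N %/ 2 - j.+1).+1 by lia.
rewrite /=; right.
have va : nat_of_ord (inord j : 'I_N.+1) = j by rewrite inordK //; lia.
have vb : nat_of_ord (inord j.+1 : 'I_N.+1) = j.+1 by rewrite inordK //; lia.
exists ((s^-1)%g (inord j)), ((s^-1)%g (inord j.+1)); split.
  move/perm_inj/(congr1 (@nat_of_ord _)); rewrite va vb; lia.
have Hans : answer s ((s^-1)%g (inord j)) ((s^-1)%g (inord j.+1)) = adjn s j.
  by rewrite /answer !permKV va vb ltnSn.
rewrite Hans; split.
  by apply: IH; lia.
move=> _ t Ht; apply: win_ub0 => //.
have := path_count (m := j.+1) _ Ht; rewrite /=.
have := count_size (fun i => adjn t i \notin adjn s j :: path s j) (iota 0 N).
rewrite size_iota /miss -!addnn; lia.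
Qed.

Lemma step_props N (L : seq 'I_N.+1) v (V : {set 'I_N.+1}) :
  uniq L -> L =i V :\ v -> v \in V ->
  [/\ uniq (rcons L v), rcons L v =i V,
      forall x, x \in L -> index x (rcons L v) = index x L &
      index v (rcons L v) = size L].
Proof.
move=> Hu Hm vV.
have vL : v \notin L by rewrite Hm setD11.
split.
- by rewrite rcons_uniq vL Hu.
- by move=> x; rewrite mem_rcons in_cons Hm in_setD1; case: eqP => // ->.
- by move=> x xL; rewrite -cats1 index_cat xL.
- by rewrite -cats1 index_cat (negbTE vL) /= eqxx addn0.
Qed.

Lemma sep N (s : {perm 'I_N.+1}) : forall k (V X : {set 'I_N.+1})
  (E : seq ('I_N.+1 * 'I_N.+1)), #|V| = k ->
  (forall e, e \in E -> [&& e.1 \in V, e.2 \in V & s e.1 < s e.2]) ->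
  (size E).*2 + 1 + #|X| <= #|V| ->
  exists L0 v, [/\ uniq (rcons L0 v), rcons L0 v =i V, v \notin X &
     forall e, e \in E -> index e.1 (rcons L0 v) + 1 < index e.2 (rcons L0 v)].
Proof.
elim=> [|k IH] V X E Hk HE Hsz; first by rewrite Hk in Hsz; lia.
case: (boolP [exists v, [&& v \in V, v \notin X, ~~ has (fun e => e.1 == v) E
                          & has (fun e => e.2 == v) E]]).
  case/existsP => v /and4P [vV vX vsink vhead].
  set E' := [seq e <- E | e.2 != v].
  set I := [set a | (a, v) \in E].
  have HI : #|I| <= count (fun e => e.2 == v) E.
    have : #|I| <= #|[seq e.1 | e <- E & e.2 == v]|.
      apply: subset_leq_card; apply/subsetP => a; rewrite inE => h.
      by apply/mapP; exists (a, v) => //; rewrite mem_filter /= eqxx.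
    move/leq_trans; apply; apply: leq_trans (card_size _) _.
    by rewrite size_map size_filter.
  have Hd : 0 < count (fun e => e.2 == v) E by rewrite -has_count.
  have HszE : size E = size E' + count (fun e => e.2 == v) E.
    rewrite size_filter addnC.
    by have := count_predC (fun e => e.2 == v) E.
  have HV' : #|V :\ v| = k by have := cardsD1 v V; rewrite vV Hk; clear; lia.
  have Hsink : forall e, e \in E -> e.1 != v.
    by move=> e eE; apply/eqP => E1; move/hasPn: vsink => /(_ e eE); rewrite E1 eqxx.
  have HE' : forall e, e \in E' -> [&& e.1 \in V :\ v, e.2 \in V :\ v & s e.1 < s e.2].
    move=> e; rewrite mem_filter => /andP [ne2 eE].
    have /and3P [h1 h2 h3] := HE e eE.
    by rewrite !in_setD1 ne2 h1 h2 h3 (Hsink e eE).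
  have Hsz' : (size E').*2 + 1 + #|I| <= #|V :\ v|.
    move: Hsz HI Hd; rewrite HV' Hk HszE -!addnn; clear; lia.
  have [L0 [v' [Hu Hm Hv' Hidx]]] := IH (V :\ v) I E' HV' HE' Hsz'.
  exists (rcons L0 v'), v.
  have [Hu2 Hm2 Hi1 Hi2] := step_props Hu Hm vV.
  split => // e eE.
  have /and3P [h1 h2 h3] := HE e eE.
  case: (eqVneq e.2 v) => He2.
    have e1I : e.1 \in I by rewrite inE -He2; case: e eE {h1 h2 h3 He2} => ? ?.
    have e1L : e.1 \in rcons L0 v' by rewrite Hm in_setD1 (Hsink e eE) h1.
    have e1L0 : e.1 \in L0.
      move: e1L; rewrite mem_rcons in_cons; case: eqP => //= E1.
      by move: Hv'; rewrite -E1 e1I.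
    rewrite He2 Hi2 Hi1 // size_rcons -cats1 index_cat e1L0.
    by rewrite addn1 ltnS index_mem.
  have eE' : e \in E' by rewrite mem_filter He2 eE.
  have /and3P [g1 g2 _] := HE' e eE'.
  rewrite !Hi1 ?Hm //; exact: Hidx.
rewrite negb_exists => /forallP Hna.
case: (posnP #|X|) => HX.
  have X0 := cards0_eq HX.
  case: E HE Hsz Hna => [|e0 E0] HE Hsz Hna.
    move: (enum_uniq (mem V)) (mem_enum (mem V)).
    case/lastP: (enum (mem V)) => [|L0 v] Hu Hm.
      have : 0 < #|V| by move: Hsz; clear; rewrite /=; lia.
      by rewrite card_gt0 => /set0Pn [x]; rewrite -Hm.
    by exists L0, v; split => //; rewrite X0 in_set0.
  exfalso.
  set H := [set x | has (fun e => e.2 == x) (e0 :: E0)].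
  have e0H : e0.2 \in H by rewrite inE /= eqxx.
  case: (arg_maxnP (fun x => nat_of_ord (s x)) e0H) => h hH hmax.
  have hH' : h \in H := hH.
  have hh : has (fun e => e.2 == h) (e0 :: E0) by move: hH'; rewrite inE.
  have hV : h \in V by case/hasP: hh => e eE /eqP <-; have /and3P [] := HE e eE.
  have hs : ~~ has (fun e => e.1 == h) (e0 :: E0).
    apply/hasPn => e eE; apply/negP => /eqP E1.
    have /and3P [_ _ hl] := HE e eE.
    have : e.2 \in H by rewrite inE; apply/hasP; exists e => //.
    move/hmax; rewrite -E1 => h'; have h2 : s e.2 <= s e.1 := h'; by rewrite leqNgt hl in h2.
  by have := Hna h; rewrite X0 in_set0 hV hh hs.
set Tch := [seq e.1 | e <- E] ++ [seq e.2 | e <- E].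
have : 0 < #|V :\: ([set x in Tch] :|: X)|.
  have h1 : #|[set x in Tch]| <= (size E).*2.
    rewrite cardsE; apply: leq_trans (card_size Tch) _.
    by rewrite size_cat !size_map addnn.
  have h2 : #|V :&: ([set x in Tch] :|: X)| <= #|[set x in Tch]| + #|X|.
    by apply: leq_trans (subset_leq_card (subsetIr _ _)) _; rewrite cardsU leq_subr.
  rewrite cardsD; move: Hsz h1 h2; rewrite -!addnn; clear; lia.
rewrite card_gt0 => /set0Pn [v]; rewrite in_setD in_setU inE negb_or => /andP [/andP [vT vX] vV].
have HV' : #|V :\ v| = k by have := cardsD1 v V; rewrite vV Hk; clear; lia.
have HE' : forall e, e \in E -> [&& e.1 \in V :\ v, e.2 \in V :\ v & s e.1 < s e.2].
  move=> e eE; have /and3P [h1 h2 h3] := HE e eE; rewrite !in_setD1 h1 h2 h3 !andbT.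
  apply/andP; split; apply/eqP => E1; move: vT; rewrite mem_cat -E1.
    by rewrite map_f.
  by rewrite map_f ?orbT.
have Hsz' : (size E).*2 + 1 + #|(set0 : {set 'I_N.+1})| <= #|V :\ v|.
  by rewrite cards0 HV'; move: Hsz HX; rewrite Hk; clear; lia.
have [L0 [v' [Hu Hm Hv' Hidx]]] := IH (V :\ v) set0 E HV' HE' Hsz'.
exists (rcons L0 v'), v.
have [Hu2 Hm2 Hi1 Hi2] := step_props Hu Hm vV.
split => // e eE.
have /and3P [g1 g2 _] := HE' e eE.
rewrite !Hi1 ?Hm //; exact: Hidx.
Qed.

Lemma perm_of_list N (L : seq 'I_N.+1) : uniq L -> (forall x, x \in L) ->
  exists t : {perm 'I_N.+1}, forall x, nat_of_ord (t x) = index x L.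
Proof.
move=> Hu HL.
have Hs : size L = N.+1.
  have <- := card_uniqP Hu.
  have -> : #|L| = #|'I_N.+1| by apply: eq_card => x; rewrite HL.
  exact: card_ord.
have Hlt : forall x, index x L < N.+1 by move=> x; have := index_mem x L; rewrite HL Hs.
pose f x := Ordinal (Hlt x).
have finj : injective f.
  move=> x y /(congr1 (@nat_of_ord _)) /= E.
  by rewrite -(nth_index x (HL x)) E nth_index.
by exists (perm finj) => x; rewrite permE.
Qed.

Lemma miss_ge N (A : answers N.+1) t : N <= miss A t + size A.
Proof.
have E : count (fun i => adjn t i \in A) (iota 0 N) + miss A t = N.
  by have := count_predC (fun i => adjn t i \in A) (iota 0 N); rewrite size_iota.
have : count (fun i => adjn t i \in A) (iota 0 N) <= count predT A.
  apply: (count_inj (f := adjn t)); first exact: iota_uniq.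
    by move=> z _ ->.
  move=> z w; rewrite !mem_filter !mem_iota => /andP [_ hz] /andP [_ hw].
  apply: adjn_inj; lia.
rewrite count_predT; lia.
Qed.

Lemma sep_perm N (s : {perm 'I_N.+1}) (A : answers N.+1) : consistent A s ->
  (size A).*2 + 1 <= N.+1 -> exists t, consistent A t /\ miss A t = N.
Proof.
move=> Hc Hsz.
have HE : forall e, e \in A -> [&& e.1 \in [set: 'I_N.+1], e.2 \in [set: 'I_N.+1] & s e.1 < s e.2].
  by move=> e eA; rewrite !in_setT (allP Hc e eA).
have Hsz' : (size A).*2 + 1 + #|(set0 : {set 'I_N.+1})| <= #|[set: 'I_N.+1]|.
  by rewrite cards0 cardsT card_ord addn0.
have [L0 [v [Hu Hm _ Hidx]]] := sep erefl HE Hsz'.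
have HL : forall x, x \in rcons L0 v by move=> x; rewrite Hm in_setT.
have [t Ht] := perm_of_list Hu HL.
exists t; split.
  apply/allP => e eA; rewrite !Ht; have := Hidx e eA; rewrite addn1; exact: ltnW.
suff : all (fun i => adjn t i \notin A) (iota 0 N) by rewrite all_count size_iota => /eqP.
apply/allP => i.
rewrite mem_iota add0n => /andP [_ hi]; apply/negP => hA.
have := Hidx _ hA; rewrite /= -!Ht !permKV !inordK //; lia.
Qed.

Lemma chain N (s : {perm 'I_N.+1}) : forall m q (A : answers N.+1),
  consistent A s -> size A + m.+1 = N %/ 2 -> win q A s 1 -> N %/ 2 + N <= size A + q.
Proof.
have nd : forall (A : answers N.+1), consistent A s -> size A < N -> ~ determined A.
  move=> A Hc hA Hd; have := miss0_det Hd Hc; have := miss_ge A s; lia.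
elim=> [|m IH] q A Hc Hsz; (case: q => [|q] /=).
- by move=> Hd; exfalso; apply: (nd A Hc) Hd; lia.
- case=> [Hd|[i [j [Hij [H1 H2]]]]]; first by exfalso; apply: (nd A Hc) Hd; lia.
  have Hc' := ans_cons Hij Hc.
  have Hs2 : (size (answer s i j :: A)).*2 + 1 <= N.+1.
    by rewrite /= -addnn; move: Hsz; clear; lia.
  have [t [Ht Hm]] := sep_perm Hc' Hs2.
  have := win_lb Ht (H2 isT t Ht); rewrite Hm; lia.
- by move=> Hd; exfalso; apply: (nd A Hc) Hd; lia.
- case=> [Hd|[i [j [Hij [H1 H2]]]]]; first by exfalso; apply: (nd A Hc) Hd; lia.
  have := IH q _ (ans_cons Hij Hc) _ H1; rewrite /=.
  move=> H; have Hs3 : (size A).+1 + m.+1 = N %/ 2 by move: Hsz; clear; lia.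
  have := H Hs3; lia.
Qed.

Lemma lb N q (s : {perm 'I_N.+1}) : win q [::] s 1 -> N + N %/ 2 <= q.
Proof.
move=> Hw.
case: (posnP (N %/ 2)) => HJ.
  have := win_lb (erefl : consistent [::] s) Hw.
  have : miss [::] s = N.
    suff : all (fun i => adjn s i \notin [::]) (iota 0 N) by rewrite all_count size_iota => /eqP.
    by apply/allP.
  lia.
have := chain (m := (N %/ 2).-1) (erefl : consistent [::] s) _ Hw.
rewrite /= => H; have Hs3 : 0 + (N %/ 2).-1.+1 = N %/ 2 by lia.
have := H Hs3; lia.
Qed.

Theorem proposition4 (n : nat) (hn : 1 <= n) :
  is_D 1 n ((3 * n).+1 %/ 2 - 2).
Proof.
case: n hn => [//|N] _.
have -> : (3 * N.+1).+1 %/ 2 - 2 = N + N %/ 2 by lia.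
split.
  move=> s; have := ub s (r := N) (j := 0) erefl; by rewrite subn0.
move=> q Hq; exact: lb (Hq 1%g).
Qed.
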